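(* Let $\Omega$ be a finite search space. Let $S=\{\phi_i\}_{i}$ be a countable set of decomposable probability-of-success metrics and let $\mathcal{D}$ be a probability distribution over $S$. Then the metric $$\phi'(t,f)=\mathbb{E}_{\phi\sim\mathcal{D}}[\phi(t,f)]=\sum_i \mathcal{D}(\phi_i)\,\phi_i(t,f)$$ is also a decomposable probability-of-success metric.
   Context: A probability-of-success metric $\phi$ assigns to each target set $t\subseteq\Omega$ and information resource $f$ a success probability. It is called decomposable if for each $f$ there exists a probability vector $\mathbf{P}_{\phi,f}\in\mathbb{R}^{|\Omega|}$ (nonnegative entries summing to $1$), not a function of $t$, such that $\phi(t,f)=\mathbf{t}^\top\mathbf{P}_{\phi,f}$ for all $t\subseteq\Omega$, where $\mathbf{t}\in\{0,1\}^{|\Omega|}$ is the indicator vector of $t$. *)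

(* Defs.v *)
From HB Require Import structures.
From mathcomp Require Import all_boot all_order all_algebra.
From mathcomp Require Import all_classical all_reals all_analysis.
Set Implicit Arguments. Unset Strict Implicit. Unset Printing Implicit Defensive.
Import Order.TTheory GRing.Theory Num.Theory numFieldNormedType.Exports.
Local Open Scope classical_set_scope.
Local Open Scope ring_scope.

Definition metric (R : realType) (Omega : finType) (F : Type) :=
  {set Omega} -> F -> R.

Definition prob_vector (R : realType) (Omega : finType) (P : Omega -> R) :=
  (forall w, 0 <= P w) /\ \sum_(w : Omega) P w = 1.

(* phi(t,f) = t^T P_{phi,f}, i.e. the sum of P over the indicator's support. *)
Definition decomposable (R : realType) (Omega : finType) (F : Type)
    (phi : metric R Omega F) :=
  forall f : F, exists P : Omega -> R,
    prob_vector P /\ forall t : {set Omega}, phi t f = \sum_(w in t) P w.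

(* A probability distribution on a countable index set, indexed by nat:
   nonnegative weights whose series converges to 1. *)
Definition prob_weights (R : realType) (D : nat -> R) :=
  (forall i, 0 <= D i) /\
  (fun n => \sum_(0 <= i < n) D i) @ \oo --> (1 : R).

Definition mixture (R : realType) (Omega : finType) (F : Type)
    (D : nat -> R) (phis : nat -> metric R Omega F) : metric R Omega F :=
  fun t f => limn (fun n => \sum_(0 <= i < n) (D i * phis i t f)).

(* Main.v *)
Require Import Defs.
From HB Require Import structures.
From mathcomp Require Import all_boot all_order all_algebra.
From mathcomp Require Import all_classical all_reals all_analysis.
Import Order.TTheory GRing.Theory Num.Theory numFieldNormedType.Exports.
Local Open Scope classical_set_scope.
Local Open Scope ring_scope.

Theorem lemma3 (R : realType) (Omega : finType) (F : Type)
    (phis : nat -> metric R Omega F) (D : nat -> R) :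
  (forall i, decomposable (phis i)) ->
  prob_weights D ->
  decomposable (mixture D phis).
Proof.
move=> hdec [D0 Dcvg] f.
have [Ps HPs] := choice (fun i => hdec i f).
pose u (w : Omega) (n : nat) := \sum_(0 <= i < n) D i * Ps i w.
have Ps0 i w : 0 <= Ps i w by case: (HPs i) => [[]].
have Ps1 i w : Ps i w <= 1.
  case: (HPs i) => [[_ s1] _]; rewrite -s1 (bigD1 w) //= lerDl.
  by apply: sumr_ge0 => j _.
have Dnd : {homo (fun n => \sum_(0 <= i < n) D i) : n m / (n <= m)%N >-> n <= m}.
  move=> n m nm; rewrite (big_cat_nat (leq0n n) nm) /= lerDl.
  by apply: sumr_ge0 => j _.
have Dle n : \sum_(0 <= i < n) D i <= 1.
  rewrite -(cvg_lim _ Dcvg) //; apply: nondecreasing_cvgn_le => //.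
  by apply/cvg_ex; exists 1.
have und w : {homo u w : n m / (n <= m)%N >-> n <= m}.
    move=> n m nm; rewrite /u (big_cat_nat (leq0n n) nm) /= lerDl.
    by apply: sumr_ge0 => j _; rewrite mulr_ge0.
have ucvg w : cvgn (u w).
  apply: nondecreasing_is_cvgn; first exact: und.
  exists 1 => _ [n _ <-]; apply: le_trans (Dle n).
  by apply: ler_sum => i _; rewrite ler_piMr.
have sumcvg (A : {pred Omega}) :
    (fun n => \sum_(w in A) u w n) @ \oo --> \sum_(w in A) limn (u w).
  apply: cvg_big => //.
  exact: add_continuous.
have swap (A : {pred Omega}) n :
    \sum_(w in A) u w n = \sum_(0 <= i < n) D i * \sum_(w in A) Ps i w.
  rewrite /u exchange_big /=; apply: eq_bigr => i _.
  by rewrite mulr_sumr.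
exists (fun w => limn (u w)); split; first split.
- move=> w; have := nondecreasing_cvgn_le (und w) (ucvg w) 0.
  by rewrite /u big_geq.
- have := sumcvg [pred w | true].
  rewrite (_ : (fun n => _) = fun n => \sum_(0 <= i < n) D i); last first.
    apply: funext => n; rewrite swap; apply: eq_bigr => i _.
    by case: (HPs i) => [[_ s1] _]; rewrite s1 mulr1.
  move=> h; have := cvg_unique _ h Dcvg.
  by move=> /(_ _) ->.
- move=> t; rewrite /mixture.
  have := sumcvg [pred w in t].
  rewrite (_ : (fun n => _) = fun n => \sum_(0 <= i < n) D i * phis i t f).
    by move/cvg_lim => ->.
  apply: funext => n; rewrite swap; apply: eq_bigr => i _.
  by case: (HPs i) => [_ ->].
Qed.
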